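(* Let $d\ge1$ and let $c_1\ge c_2\ge\cdots\ge c_d\ge 0$ be real numbers. Define $\nu\in\mathbb R^{2\times\cdots\times2}$ with binary indices $i_1,\dots,i_d\in\{0,1\}$ by $\nu(i_1,\dots,i_d)=\max\{c_k: i_k=1\}$ if some $i_k=1$, and $\nu(0,\dots,0)=0$. Then $\nu$ admits an exact TT-decomposition all of whose TT-ranks are at most $2$. *)

(* Defs.v *)
From HB Require Import structures.
From mathcomp Require Import all_boot all_order all_algebra.
From mathcomp Require Import reals.
Set Implicit Arguments. Unset Strict Implicit. Unset Printing Implicit Defensive.
Import Order.TTheory GRing.Theory Num.Theory.
Local Open Scope ring_scope.

Fixpoint ttchain (R : pzRingType) (r : nat -> nat)
  (G : forall k : nat, 'M[R]_(r k, r k.+1)) (k n : nat)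
  : 'M[R]_(r k, r (n + k)%N) :=
  match n return 'M[R]_(r k, r (n + k)%N) with
  | 0 => 1%:M
  | n'.+1 => ttchain G k n' *m G (n' + k)%N
  end.

(* With boundary ranks
   r 0 = r d = 1 the product is a 1x1 matrix; the double sum just reads
   off its unique entry. *)
Definition tt_eval (R : pzRingType) (d : nat) (r : nat -> nat)
  (G : forall k : nat, bool -> 'M[R]_(r k, r k.+1)) (i : d.-tuple bool) : R :=
  let M := ttchain (fun k => G k (nth false i k)) 0 d in
  \sum_(a < r 0%N) \sum_(b < r (d + 0)%N) M a b.

Definition has_TT_ranks_le2 (R : pzRingType) (d : nat)
  (nu : d.-tuple bool -> R) : Prop :=
  exists r : nat -> nat,
    r 0%N = 1%N /\ r d = 1%N /\ (forall k, (0 < k < d)%N -> (r k <= 2)%N) /\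
    exists G : forall k : nat, bool -> 'M[R]_(r k, r k.+1),
      forall i : d.-tuple bool, nu i = tt_eval G i.

(* nu(i_1..i_d) = max{c_k : i_k = 1} if some i_k = 1, and 0 otherwise
   (index value 1 is encoded as true). *)
Definition nu_tensor (R : realType) (d : nat) (c : 'I_d -> R)
  (i : d.-tuple bool) : R :=
  if [exists k : 'I_d, tnth i k]
  then \big[Num.max/0]_(k < d | tnth i k) c k
  else 0.

(* Main.v *)
Require Import Defs.
From HB Require Import structures.
From mathcomp Require Import all_boot all_order all_algebra.
From mathcomp Require Import reals.
Import Order.TTheory GRing.Theory Num.Theory.
Local Open Scope ring_scope.

Section TT.
Variables (R : realType) (d : nat) (c : 'I_d -> R) (t : d.-tuple bool).

Definition cn (k : nat) : R := match insub k with Some o => c o | None => 0 end.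
Definition st (k j : nat) : bool :=
  if k == 0%N then false else if k == d then true else j == 1%N.
Definition Tm (k : nat) (b s0 s : bool) : R :=
  if b then (if s0 then (if s then 1 else 0) else (if s then cn k else 0))
  else (if s0 == s then 1 else 0).
Definition rr (k : nat) : nat := if (k == 0%N) || (k == d) then 1%N else 2%N.
Definition GG (k : nat) (b : bool) : 'M[R]_(rr k, rr k.+1) :=
  \matrix_(p < rr k, q < rr k.+1) Tm k b (st k p) (st k.+1 q).
Fixpoint V (n : nat) (s : bool) : R :=
  match n with
  | 0 => (~~ s)%:R
  | n'.+1 => V n' false * Tm n' (nth false t n') false s
             + V n' true * Tm n' (nth false t n') true s
  end.

Lemma sum_st k (f : bool -> R) : (k < d)%N -> (k = 0%N -> f true = 0) ->
  \sum_(m < rr k) f (st k m) = f false + f true.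
Proof.
move=> hk h0.
rewrite -(big_mkord xpredT (fun m => f (st k m))).
case: (eqVneq k 0%N) => [k0|kn0].
  have -> : rr k = 1%N by rewrite /rr k0.
  by rewrite big_nat1 /st k0 /= h0 // addr0.
have -> : rr k = 2%N by rewrite /rr (negPf kn0) /= (ltn_eqF hk).
rewrite !big_nat_recr //= big_geq // add0r /st (negPf kn0) (ltn_eqF hk).
by [].
Qed.

Lemma chain_ok n : (n <= d)%N -> forall (p : 'I_(rr 0)) (q : 'I_(rr (n + 0))),
  ttchain (fun k => GG k (nth false t k)) 0 n p q = V n (st (n + 0) q).
Proof.
elim: n => [|n IH] hn p q.
  have hp : forall x : 'I_(rr 0), val x = 0%N.
    by case=> m /=; rewrite /rr eqxx /=; case: m.
  by rewrite /= mxE /st /= (val_inj (etrans (hp p) (esym (hp q)))) eqxx.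
rewrite /= mxE.
under eq_bigr => m _ do rewrite IH ?(ltnW hn) // mxE.
rewrite (@sum_st (n + 0) (fun s => V n s * Tm (n + 0) (nth false t (n + 0)) s (st (n + 0).+1 q))).
- by move: (nat_of_ord q) => j; rewrite !addn0.
- by rewrite addn0.
- by move: (nat_of_ord q) => j; rewrite addn0 => ->; rewrite /= mul0r.
Qed.

Definition E n := [exists k : 'I_d, (k < n)%N && tnth t k].
Definition B n := \big[Num.max/0]_(k < d | (k < n)%N && tnth t k) c k.


Lemma V_sem (hdec : forall k l : 'I_d, (k <= l)%N -> c l <= c k)
  (hnn : forall k : 'I_d, 0 <= c k) n :
  (n <= d)%N -> V n false = (~~ E n)%:R /\ V n true = B n.
Proof.
elim: n => [|n IH] hn.
  have -> : E 0 = false by apply/existsP => -[k].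
  split=> //; rewrite /B bigmax_eq_id //.
have [hf ht] := IH (ltnW hn).
set o := Ordinal hn.
have hb : nth false t n = tnth t o by rewrite (tnth_nth false).
have hc : cn n = c o by rewrite /cn -[n]/(val o) valK.
have hP : forall k : 'I_d, ((k < n.+1)%N && tnth t k) = ((k < n)%N && tnth t k) || ((k == o) && tnth t o).
  move=> k; rewrite ltnS leq_eqVlt; case: (eqVneq k o) => [->|ko] /=.
    by rewrite ltnn /= eqxx.
  by rewrite orbF -[_ == _]/(k == o :> 'I_d) (negPf ko).
have hE : E n.+1 = E n || tnth t o.
  apply/existsP/orP => [[k]|[/existsP[k hk]|ho]].
  - by rewrite hP => /orP[hk|/andP[_ ->]]; [left; apply/existsP; exists k|right].
  - by exists k; rewrite hP hk.
  - by exists o; rewrite hP eqxx ho orbT.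
rewrite /= hb hE hf ht /Tm hc.
case bo: (tnth t o); case hEn: (E n);
  rewrite /= ?mulr0 ?mulr1 ?mul0r ?mul1r ?addr0 ?add0r; split => //.
- rewrite /B; apply: le_anti; apply/andP; split.
  + apply/bigmax_leP; split; first exact: bigmax_ge_id.
    by move=> k hk; apply: le_bigmax_cond; rewrite hP hk.
  + apply/bigmax_leP; split; first exact: bigmax_ge_id.
    move=> k; rewrite hP => /orP[hk|/andP[/eqP -> _]]; first exact: le_bigmax_cond.
    case/existsP: hEn => k0 /andP[hk0 tk0].
    apply: (@bigmax_sup _ _ _ _ k0) => //; first by rewrite hk0 tk0.
    by apply: hdec; apply: ltnW.
- have -> : B n = 0.
    rewrite /B bigmax_eq_id // => k hk; exfalso.
    by move/negbT: hEn => /existsP; apply; exists k.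
  rewrite addr0 /B; apply: le_anti; apply/andP; split.
    by apply: (@bigmax_sup _ _ _ _ o) => //; rewrite hP eqxx bo orbT.
  apply/bigmax_leP; split; first exact: hnn.
  move=> k; rewrite hP => /orP[hk|/andP[/eqP -> _]] //.
  by move/negbT: hEn => /existsP; case; exists k.
all: by rewrite /B; apply: eq_bigl => k; rewrite hP bo andbF orbF.
Qed.

End TT.
Theorem mainTheorem5 (R : realType) (d : nat) (hd : (1 <= d)%N)
  (c : 'I_d -> R)
  (hdec : forall k l : 'I_d, (k <= l)%N -> c l <= c k)
  (hnn : forall k : 'I_d, 0 <= c k) :
  has_TT_ranks_le2 (nu_tensor c).
Proof.
have dn0 : d != 0%N by rewrite -lt0n.
exists (rr d); split; first by rewrite /rr eqxx.
split; first by rewrite /rr eqxx orbT.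
split; first by move=> k _; rewrite /rr; case: ifP.
exists (@GG R d c) => i; rewrite /tt_eval.
transitivity (\sum_(a < rr d 0) V R d c i d true).
  rewrite -(big_mkord xpredT (fun _ => V R d c i d true)).
  have -> : rr d 0 = 1%N by rewrite /rr eqxx.
  rewrite big_nat1 /nu_tensor.
  have [_ ->] := @V_sem R d c i hdec hnn d (leqnn d).
  rewrite /B; case: ifP => hE.
    by apply: eq_bigl => k; rewrite ltn_ord.
  rewrite bigmax_eq_id // => k hk; exfalso.
  by move/negbT: hE => /existsP; apply; exists k; case/andP: hk.
apply: eq_bigr => a _.
rewrite (eq_bigr (fun b : 'I_(rr d (d + 0)) => V R d c i d (st d (d + 0) b))); last first.
  by move=> b _; rewrite chain_ok.
rewrite -(big_mkord xpredT (fun b => V R d c i d (st d (d + 0) b))) addn0.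
have -> : rr d d = 1%N by rewrite /rr eqxx orbT.
by rewrite big_nat1 /st (negPf dn0) eqxx.
Qed.
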